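(* Let $a\in\mathbb{D}\setminus\{0\}$ and $\alpha,\beta\in\mathbb{C}$ with $\beta\neq0$. If $\alpha+\beta K_a$ is $\mathcal{H}^2_{\omega}$-inner, then $\alpha=-\beta K_a(a)$ and $$\alpha+\beta K_a=\mu\,\frac{K_a(a)-K_a}{\sqrt{K_a(a)\,(K_a(a)-1)}}$$ for some $\mu\in\mathbb{C}$ with $|\mu|=1$; conversely every such function is $\mathcal{H}^2_{\omega}$-inner.
   Context: Let $\omega=\{\omega_n\}_{n\geq 0}$ be a sequence of positive reals with $\omega_0=1$ and $\lim_{n\to\infty}\omega_{n+1}/\omega_n=1$. $\mathcal{H}^2_{\omega}$ is the Hilbert space of power series $f(z)=\sum_{n\ge0}a_nz^n$ with $\|f\|^2=\sum_{n\geq0}\omega_n|a_n|^2<\infty$ and inner product $\langle f,g\rangle=\sum_n\omega_na_n\overline{b_n}$; its reproducing kernel on $\mathbb{D}$ is $K_\lambda(z)=\sum_{n\ge0}\overline{\lambda}^nz^n/\omega_n$. A function $f$ is $\mathcal{H}^2_{\omega}$-inner if $\|f\|=1$ and $\langle z^mf,f\rangle=0$ for all integers $m\geq1$. *)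

(* Defs.v *)
From Stdlib Require Import Reals.
Open Scope R_scope.

Definition Cplx : Type := (R * R)%type.
Definition Cre (z : Cplx) : R := fst z.
Definition Cim (z : Cplx) : R := snd z.
Definition RtoC (x : R) : Cplx := (x, 0).
Definition Czero : Cplx := (0, 0).
Definition Cone : Cplx := (1, 0).
Definition Cadd (z w : Cplx) : Cplx := (fst z + fst w, snd z + snd w).
Definition Copp (z : Cplx) : Cplx := (- fst z, - snd z).
Definition Csub (z w : Cplx) : Cplx := Cadd z (Copp w).
Definition Cmul (z w : Cplx) : Cplx :=
  (fst z * fst w - snd z * snd w, fst z * snd w + snd z * fst w).
Definition Cconj (z : Cplx) : Cplx := (fst z, - snd z).
Definition Cnorm2 (z : Cplx) : R := fst z * fst z + snd z * snd z.
Definition Cmod (z : Cplx) : R := sqrt (Cnorm2 z).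
Definition Cscale (r : R) (z : Cplx) : Cplx := (r * fst z, r * snd z).
Fixpoint Cpow (z : Cplx) (n : nat) : Cplx :=
  match n with O => Cone | S k => Cmul z (Cpow z k) end.

Definition Cseries (u : nat -> Cplx) (l : Cplx) : Prop :=
  infinite_sum (fun n => fst (u n)) (fst l) /\
  infinite_sum (fun n => snd (u n)) (snd l).

Definition admissible_weight (omega : nat -> R) : Prop :=
  (forall n, 0 < omega n) /\ omega O = 1 /\
  Un_cv (fun n => omega (S n) / omega n) 1.

(** Elements of H^2_omega are represented by their Taylor coefficient
    sequences f = sum_n f n z^n. *)
Definition in_H2 (omega : nat -> R) (f : nat -> Cplx) : Prop :=
  exists l, infinite_sum (fun n => omega n * Cnorm2 (f n)) l.

Definition H2_norm2 (omega : nat -> R) (f : nat -> Cplx) (l : R) : Prop :=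
  infinite_sum (fun n => omega n * Cnorm2 (f n)) l.

Definition H2_inner (omega : nat -> R) (f g : nat -> Cplx) (l : Cplx) : Prop :=
  Cseries (fun n => Cscale (omega n) (Cmul (f n) (Cconj (g n)))) l.

(** coefficients of z^m f *)
Definition zshift (m : nat) (f : nat -> Cplx) : nat -> Cplx :=
  fun n => if Nat.ltb n m then Czero else f (n - m)%nat.

Definition H2_inner_fun (omega : nat -> R) (f : nat -> Cplx) : Prop :=
  in_H2 omega f /\ H2_norm2 omega f 1 /\
  forall m : nat, (1 <= m)%nat -> H2_inner omega (zshift m f) f Czero.

(** Reproducing kernel K_lambda(z) = sum_n conj(lambda)^n z^n / omega_n *)
Definition Kker (omega : nat -> R) (lam : Cplx) : nat -> Cplx :=
  fun n => Cscale (/ omega n) (Cpow (Cconj lam) n).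

Definition peval (f : nat -> Cplx) (z : Cplx) (l : Cplx) : Prop :=
  Cseries (fun n => Cmul (f n) (Cpow z n)) l.

Definition Cconst (c : Cplx) : nat -> Cplx := fun n => match n with O => c | _ => Czero end.
Definition Fadd (f g : nat -> Cplx) : nat -> Cplx := fun n => Cadd (f n) (g n).
Definition Fscale (c : Cplx) (f : nat -> Cplx) : nat -> Cplx := fun n => Cmul c (f n).

(* Main.v *)
Require Import Defs.
From Stdlib Require Import Reals Lra Lia FunctionalExtensionality.
Open Scope R_scope.

Lemma Cring : ring_theory Czero Cone Cadd Cmul Csub Copp (@eq Cplx).
Proof.
  constructor; intros; try destruct x; try destruct y; try destruct z;
  unfold Czero, Cone, Csub, Cadd, Cmul, Copp; simpl; f_equal; ring.
Qed.
Add Ring CR : Cring.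

Lemma Cscale_mul s z : Cscale s z = Cmul (RtoC s) z.
Proof. destruct z; unfold Cscale, Cmul, RtoC; simpl; f_equal; ring. Qed.
Lemma RtoC_mul x y : Cmul (RtoC x) (RtoC y) = RtoC (x*y).
Proof. unfold Cmul, RtoC; simpl; f_equal; ring. Qed.
Lemma RtoC_1 : RtoC 1 = Cone. Proof. reflexivity. Qed.
Lemma Cpow_add z m k : Cpow z (m+k) = Cmul (Cpow z m) (Cpow z k).
Proof. induction m; simpl; [ring| rewrite IHm; ring]. Qed.
Lemma Cconj_mul x y : Cconj (Cmul x y) = Cmul (Cconj x) (Cconj y).
Proof. destruct x, y; unfold Cconj, Cmul; simpl; f_equal; ring. Qed.
Lemma Cconj_add x y : Cconj (Cadd x y) = Cadd (Cconj x) (Cconj y).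
Proof. destruct x, y; unfold Cconj, Cadd; simpl; f_equal; ring. Qed.
Lemma Cconj_conj x : Cconj (Cconj x) = x.
Proof. destruct x; unfold Cconj; simpl; f_equal; ring. Qed.
Lemma Cconj_RtoC x : Cconj (RtoC x) = RtoC x.
Proof. unfold Cconj, RtoC; simpl; f_equal; ring. Qed.
Lemma Cconj_pow z n : Cconj (Cpow z n) = Cpow (Cconj z) n.
Proof. induction n; simpl. unfold Cconj, Cone; simpl; f_equal; ring.
  rewrite Cconj_mul, IHn; reflexivity. Qed.
Lemma Cconj_zero : Cconj Czero = Czero.
Proof. unfold Cconj, Czero; simpl; f_equal; ring. Qed.
Lemma conj_mul_self z : Cmul (Cconj z) z = RtoC (Cnorm2 z).
Proof. destruct z; unfold Cconj, Cmul, RtoC, Cnorm2; simpl; f_equal; ring. Qed.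
Lemma Cpow_conj_mul z n : Cmul (Cpow (Cconj z) n) (Cpow z n) = RtoC (Cnorm2 z ^ n).
Proof. induction n; simpl. unfold Cmul, RtoC, Cone; simpl; f_equal; ring.
  transitivity (Cmul (Cmul (Cconj z) z) (Cmul (Cpow (Cconj z) n) (Cpow z n))); [ring|].
  rewrite IHn, conj_mul_self, RtoC_mul; reflexivity. Qed.
Lemma Cnorm2_mul x y : Cnorm2 (Cmul x y) = Cnorm2 x * Cnorm2 y.
Proof. destruct x, y; unfold Cnorm2, Cmul; simpl; ring. Qed.
Lemma Cnorm2_conj x : Cnorm2 (Cconj x) = Cnorm2 x.
Proof. destruct x; unfold Cnorm2, Cconj; simpl; ring. Qed.
Lemma Cnorm2_RtoC x : Cnorm2 (RtoC x) = x * x.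
Proof. unfold Cnorm2, RtoC; simpl; ring. Qed.
Lemma Cnorm2_pow z n : Cnorm2 (Cpow z n) = Cnorm2 z ^ n.
Proof. induction n; simpl. unfold Cnorm2, Cone; simpl; ring. rewrite Cnorm2_mul, IHn; ring. Qed.
Lemma Cnorm2_ge0 z : 0 <= Cnorm2 z.
Proof. destruct z; unfold Cnorm2; simpl; nra. Qed.
Lemma Cnorm2_eq0 z : Cnorm2 z = 0 -> z = Czero.
Proof. destruct z as [x y]; unfold Cnorm2, Czero; simpl; intro.
  assert (x = 0) by nra; assert (y = 0) by nra; subst; reflexivity. Qed.
Lemma Cmul_eq0 x y : Cmul x y = Czero -> x = Czero \/ y = Czero.
Proof. intro H. assert (Cnorm2 (Cmul x y) = 0) by (rewrite H; unfold Cnorm2, Czero; simpl; ring).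
  rewrite Cnorm2_mul in H0. destruct (Rmult_integral _ _ H0); [left|right]; apply Cnorm2_eq0; auto. Qed.

Lemma isum_affine (u v : nat -> R) l c d :
  infinite_sum u l -> (forall n, v n = c * u n + match n with O => d | _ => 0 end) ->
  infinite_sum v (c*l+d).
Proof.
  intros Hu Hv.
  assert (Hs : forall n, sum_f_R0 v n = c * sum_f_R0 u n + d).
  { induction n; simpl; rewrite Hv; [ring| rewrite IHn; ring]. }
  assert (Hc : Un_cv (fun n => c * sum_f_R0 u n + d) (c*l+d)).
  { apply CV_plus. apply CV_mult. intros e He; exists O; intros; unfold Rdist; rewrite Rminus_diag, Rabs_R0; lra.
    exact Hu. intros e He; exists O; intros; unfold Rdist; rewrite Rminus_diag, Rabs_R0; lra. }
  intros e He; destruct (Hc e He) as [N HN]; exists N; intros n Hn.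
  rewrite Hs; apply HN; exact Hn.
Qed.

Lemma sum_zero (u : nat -> R) N : (forall n, (n <= N)%nat -> u n = 0) -> sum_f_R0 u N = 0.
Proof. induction N; intro H; simpl. apply H; lia. rewrite IHN, H; [ring|lia|intros; apply H; lia]. Qed.

Lemma isum_shift (u : nat -> R) m l :
  (forall n, (n < m)%nat -> u n = 0) -> infinite_sum (fun k => u (m+k)%nat) l -> infinite_sum u l.
Proof.
  intros H0 Hs.
  assert (Hp : forall k, sum_f_R0 u (m+k) = sum_f_R0 (fun j => u (m+j)%nat) k).
  { induction k.
    - simpl. rewrite Nat.add_0_r. destruct m. reflexivity. simpl.
      rewrite sum_zero; [ring|]. intros; apply H0; lia.
    - rewrite Nat.add_succ_r. simpl. rewrite IHk, Nat.add_succ_r. reflexivity. }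
  intros e He; destruct (Hs e He) as [N HN]; exists (m+N)%nat; intros n Hn.
  replace n with (m + (n-m))%nat by lia. rewrite Hp. apply HN. lia.
Qed.

Lemma Cmul_scale_l s x y : Cmul (Cscale s x) y = Cscale s (Cmul x y).
Proof. destruct x, y; unfold Cscale, Cmul; simpl; f_equal; ring. Qed.
Lemma Cmul_scale_r s x y : Cmul x (Cscale s y) = Cscale s (Cmul x y).
Proof. destruct x, y; unfold Cscale, Cmul; simpl; f_equal; ring. Qed.
Lemma Cscale_scale s t x : Cscale s (Cscale t x) = Cscale (s*t) x.
Proof. destruct x; unfold Cscale; simpl; f_equal; ring. Qed.
Lemma Cconj_scale s x : Cconj (Cscale s x) = Cscale s (Cconj x).
Proof. destruct x; unfold Cscale, Cconj; simpl; f_equal; ring. Qed.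
Lemma Cscale_1 x : Cscale 1 x = x.
Proof. destruct x; unfold Cscale; simpl; f_equal; ring. Qed.
Lemma RtoC_scale s x : Cmul (RtoC s) x = Cscale s x.
Proof. symmetry; apply Cscale_mul. Qed.

Lemma Rdiv_le_0_compat a b : 0 <= a -> 0 < b -> 0 <= a / b.
Proof. intros; unfold Rdiv; apply Rmult_le_pos; [auto| left; apply Rinv_0_lt_compat; auto]. Qed.

Definition rr (omega : nat -> R) (a : Cplx) n := Cnorm2 a ^ n / omega n.
Definition gg omega a al be := Fadd (Cconst al) (Fscale be (Kker omega a)).

Lemma K0 omega a : omega O = 1 -> Kker omega a O = Cone.
Proof. intro h; unfold Kker; simpl; rewrite h, Rinv_1; apply Cscale_1. Qed.
Lemma Kconj omega a n : Cconj (Kker omega a n) = Cscale (/omega n) (Cpow a n).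
Proof. unfold Kker; rewrite Cconj_scale, Cconj_pow, Cconj_conj; reflexivity. Qed.
Lemma Knorm omega a n : Cnorm2 (Kker omega a n) = /omega n * /omega n * Cnorm2 a ^ n.
Proof. unfold Kker; rewrite Cscale_mul, Cnorm2_mul, Cnorm2_RtoC, Cnorm2_pow, Cnorm2_conj; ring. Qed.
Lemma KKa omega a n : Cmul (Kker omega a n) (Cpow a n) = RtoC (rr omega a n).
Proof. unfold Kker, rr; rewrite Cmul_scale_l, Cpow_conj_mul.
  unfold Cscale, RtoC; simpl; f_equal; unfold Rdiv; ring. Qed.

Lemma g0 omega a al be : omega O = 1 -> gg omega a al be O = Cadd al be.
Proof. intro h; unfold gg, Fadd, Fscale, Cconst; rewrite K0 by exact h; ring. Qed.
Lemma gpos omega a al be n : (1 <= n)%nat -> gg omega a al be n = Cmul be (Kker omega a n).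
Proof. intro; destruct n; [lia|]. unfold gg, Fadd, Fscale, Cconst; ring. Qed.

Lemma Kaa_facts omega a Kaa : peval (Kker omega a) a Kaa ->
  infinite_sum (rr omega a) (fst Kaa) /\ snd Kaa = 0.
Proof.
  intros [H1 H2].
  assert (E : forall n, Cmul (Kker omega a n) (Cpow a n) = RtoC (rr omega a n)) by apply KKa.
  split.
  - replace (fst Kaa) with (1 * fst Kaa + 0) by ring.
    eapply isum_affine; [exact H1|]. intro n; cbv beta; rewrite E; unfold RtoC; simpl; destruct n; ring.
  - apply (uniqueness_sum (fun _ => 0)).
    + replace (fun _ : nat => 0) with (fun n => snd (Cmul (Kker omega a n) (Cpow a n))).
      exact H2. apply functional_extensionality; intro n; rewrite E; reflexivity.
    + intros e He; exists O; intros. unfold Rdist.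
      replace (sum_f_R0 (fun _ => 0) n) with 0. rewrite Rminus_diag, Rabs_R0; lra.
      symmetry; apply sum_zero; auto.
Qed.

Lemma S_gt1 omega a S : omega O = 1 -> (forall n, 0 < omega n) -> a <> Czero ->
  infinite_sum (rr omega a) S -> 1 < S.
Proof.
  intros h0 hp ha hs.
  assert (hN : 0 < Cnorm2 a).
  { destruct (Rle_lt_or_eq_dec _ _ (Cnorm2_ge0 a)); auto. exfalso; apply ha, Cnorm2_eq0; auto. }
  assert (hle := sum_incr (rr omega a) 1 S hs).
  assert (0 <= sum_f_R0 (rr omega a) 1 <= S) as [_ h].
  { split. 2: apply hle. all: try (intro n; unfold rr; apply Rdiv_le_0_compat; [apply pow_le, Cnorm2_ge0| apply hp]).
    simpl; unfold rr; simpl. rewrite h0. assert (0 < omega 1%nat) by apply hp.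
    apply Rplus_le_le_0_compat. lra. apply Rdiv_le_0_compat; nra. }
  simpl in h; unfold rr in h; simpl in h. rewrite h0 in h.
  assert (0 < Cnorm2 a * 1 / omega 1%nat) by (apply Rdiv_lt_0_compat; [lra| apply hp]).
  lra.
Qed.

Lemma norm_g omega a al be Sv : omega O = 1 -> (forall n, 0 < omega n) ->
  infinite_sum (rr omega a) Sv ->
  H2_norm2 omega (gg omega a al be) (Cnorm2 be * Sv + (Cnorm2 (Cadd al be) - Cnorm2 be)).
Proof.
  intros h0 hp hs. unfold H2_norm2. eapply isum_affine; [exact hs|].
  intro n; destruct n.
  - rewrite g0 by exact h0. rewrite h0. unfold rr; simpl; rewrite h0. field.
  - rewrite gpos by lia. rewrite Cnorm2_mul, Knorm. unfold rr.
    assert (0 < omega (S n)) by apply hp. field. lra.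
Qed.

Definition tt omega a al be m n :=
  Cscale (omega n) (Cmul (zshift m (gg omega a al be) n) (Cconj (gg omega a al be n))).

Lemma tt_low omega a al be m n : (n < m)%nat -> tt omega a al be m n = Czero.
Proof. intro h; unfold tt, zshift. rewrite (proj2 (Nat.ltb_lt _ _) h).
  unfold Cscale, Cmul, Czero; simpl; f_equal; ring. Qed.

Lemma tt_high omega a al be m k : omega O = 1 -> (forall n, 0 < omega n) -> (1 <= m)%nat ->
  tt omega a al be m (m+k) =
  Cmul (Cmul (Cpow a m) (Cconj be)) (Cadd (Cscale (rr omega a k) be) match k with O => al | _ => Czero end).
Proof.
  intros h0 hp hm. unfold tt, zshift.
  rewrite (proj2 (Nat.ltb_ge _ _)) by lia. replace (m + k - m)%nat with k by lia.
  rewrite (gpos _ _ _ _ (m+k)) by lia.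
  rewrite Cconj_mul, Kconj, Cpow_add.
  assert (hw : 0 < omega (m+k)%nat) by apply hp.
  destruct k.
  - rewrite g0 by exact h0. unfold rr; simpl. rewrite h0.
    replace (1/1) with 1 by field. rewrite Cscale_1.
    rewrite !Cmul_scale_r, Cscale_scale, Rinv_r by lra. rewrite Cscale_1. ring.
  - rewrite gpos by lia. unfold Kker.
    repeat first [rewrite Cmul_scale_r | rewrite Cmul_scale_l | rewrite Cscale_scale].
    replace (Cmul (Cmul be (Cpow (Cconj a) (S k))) (Cmul (Cconj be) (Cmul (Cpow a m) (Cpow a (S k)))))
      with (Cmul (Cmul (Cpow (Cconj a) (S k)) (Cpow a (S k))) (Cmul (Cmul (Cpow a m) (Cconj be)) be)) by ring.
    rewrite Cpow_conj_mul, RtoC_scale, Cscale_scale.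
    replace (Cadd (Cscale (rr omega a (S k)) be) Czero) with (Cscale (rr omega a (S k)) be) by ring.
    rewrite Cmul_scale_r. f_equal. unfold rr.
    assert (0 < omega (S k)) by apply hp. field. split; lra.
Qed.

Lemma cseries_gen (t : nat -> Cplx) (r : nat -> R) Sv m c be al :
  infinite_sum r Sv -> (forall n, (n < m)%nat -> t n = Czero) ->
  (forall k, t (m+k)%nat = Cmul c (Cadd (Cscale (r k) be) match k with O => al | _ => Czero end)) ->
  Cseries t (Cmul c (Cadd (Cscale Sv be) al)).
Proof.
  intros hs hl hh.
  split; apply isum_shift with m; try (intros n hn; rewrite hl by exact hn; reflexivity).
  - replace (fst (Cmul c (Cadd (Cscale Sv be) al))) with (fst (Cmul c be) * Sv + fst (Cmul c al))
      by (destruct c, be, al; unfold Cmul, Cadd, Cscale; simpl; ring).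
    eapply isum_affine; [exact hs|]. intro n. cbv beta. rewrite hh.
    destruct n; destruct c, be, al; unfold Cmul, Cadd, Cscale, Czero; simpl; ring.
  - replace (snd (Cmul c (Cadd (Cscale Sv be) al))) with (snd (Cmul c be) * Sv + snd (Cmul c al))
      by (destruct c, be, al; unfold Cmul, Cadd, Cscale; simpl; ring).
    eapply isum_affine; [exact hs|]. intro n. cbv beta. rewrite hh.
    destruct n; destruct c, be, al; unfold Cmul, Cadd, Cscale, Czero; simpl; ring.
Qed.

Lemma inner_g omega a al be Sv m : omega O = 1 -> (forall n, 0 < omega n) -> (1 <= m)%nat ->
  infinite_sum (rr omega a) Sv ->
  H2_inner omega (zshift m (gg omega a al be)) (gg omega a al be)
    (Cmul (Cmul (Cpow a m) (Cconj be)) (Cadd (Cscale Sv be) al)).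
Proof.
  intros h0 hp hm hs. unfold H2_inner.
  change (Cseries (tt omega a al be m) (Cmul (Cmul (Cpow a m) (Cconj be)) (Cadd (Cscale Sv be) al))).
  apply cseries_gen with (r := rr omega a) (m := m); auto.
  - intros; apply tt_low; auto.
  - intros; apply tt_high; auto.
Qed.

Lemma cseries_unique t l1 l2 : Cseries t l1 -> Cseries t l2 -> l1 = l2.
Proof. intros [a1 b1] [a2 b2]. destruct l1, l2; simpl in *.
  f_equal; eapply uniqueness_sum; eauto. Qed.

Theorem mainTheorem12 (omega : nat -> R) (a : Cplx) (Kaa : Cplx) :
  admissible_weight omega ->
  Cmod a < 1 -> a <> Czero ->
  (* Kaa = K_a(a) *)
  peval (Kker omega a) a Kaa ->
  (forall alpha beta : Cplx, beta <> Czero ->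
     H2_inner_fun omega (Fadd (Cconst alpha) (Fscale beta (Kker omega a))) ->
     alpha = Copp (Cmul beta Kaa) /\
     exists mu : Cplx, Cmod mu = 1 /\
       Fadd (Cconst alpha) (Fscale beta (Kker omega a)) =
       Fscale (Cmul mu (RtoC (/ sqrt (fst Kaa * (fst Kaa - 1)))))
              (Fadd (Cconst Kaa) (Fscale (Copp Cone) (Kker omega a)))) /\
  (forall mu : Cplx, Cmod mu = 1 ->
     H2_inner_fun omega
       (Fscale (Cmul mu (RtoC (/ sqrt (fst Kaa * (fst Kaa - 1)))))
               (Fadd (Cconst Kaa) (Fscale (Copp Cone) (Kker omega a))))).
Proof.
  intros [hp [h0 _]] _ ha hK.
  destruct (Kaa_facts _ _ _ hK) as [hs hKi].
  assert (hS : 1 < fst Kaa) by (eapply S_gt1; eauto).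
  assert (hKaa : Kaa = RtoC (fst Kaa)) by (destruct Kaa; unfold RtoC; simpl in *; subst; reflexivity).
  set (Sv := fst Kaa) in *.
  assert (hP : 0 < Sv * (Sv - 1)) by nra.
  set (s := sqrt (Sv * (Sv - 1))).
  assert (hs0 : 0 < s) by (apply sqrt_lt_R0; exact hP).
  assert (hss : s * s = Sv * (Sv - 1)) by (apply sqrt_sqrt; lra).
  split.
  - intros al be hbe [hin [hn hinner]].
    change (Fadd (Cconst al) (Fscale be (Kker omega a))) with (gg omega a al be) in *.
    assert (hI := inner_g omega a al be Sv 1%nat h0 hp (le_n _) hs).
    assert (hz := cseries_unique _ _ _ hI (hinner 1%nat (le_n _))).
    destruct (Cmul_eq0 _ _ hz) as [hc | hal].
    + exfalso. destruct (Cmul_eq0 _ _ hc) as [h1 | h1].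
      * apply ha. rewrite <- h1. simpl. ring.
      * apply hbe. rewrite <- (Cconj_conj be), h1. apply Cconj_zero.
    + assert (hal' : al = Copp (Cmul be Kaa)).
      { transitivity (Cadd (Cadd (Cscale Sv be) al) (Copp (Cscale Sv be))); [ring|].
        rewrite hal, hKaa, Cscale_mul. ring. }
      split; [exact hal'|].
      assert (hN := uniqueness_sum _ _ _ (norm_g omega a al be Sv h0 hp hs) hn).
      assert (hab : Cadd al be = Cscale (1 - Sv) be).
      { rewrite hal', hKaa, Cscale_mul. destruct be; unfold RtoC, Cmul, Cadd, Copp; simpl; f_equal; ring. }
      rewrite hab, Cscale_mul, Cnorm2_mul, Cnorm2_RtoC in hN.
      assert (hb : Cnorm2 be * (s * s) = 1) by (rewrite hss; nra).
      exists (Copp (Cscale s be)). split.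
      * unfold Cmod. replace (Cnorm2 (Copp (Cscale s be))) with 1. apply sqrt_1.
        rewrite <- hb. replace (Copp (Cscale s be)) with (Cmul (RtoC (- s)) be)
          by (destruct be; unfold RtoC, Cmul, Copp, Cscale; simpl; f_equal; ring).
        rewrite Cnorm2_mul, Cnorm2_RtoC; ring.
      * assert (hm : Cmul (Copp (Cscale s be)) (RtoC (/ s)) = Copp be).
        { rewrite Cscale_mul.
          transitivity (Copp (Cmul (Cmul (RtoC s) (RtoC (/ s))) be)); [ring|].
          rewrite RtoC_mul, Rinv_r by lra. rewrite RtoC_1; ring. }
        rewrite hm. apply functional_extensionality; intro n.
        unfold gg, Fadd, Fscale, Cconst. rewrite hal'. destruct n; ring.
  - intros mu hmu.
    assert (hmu2 : Cnorm2 mu = 1).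
    { rewrite <- (sqrt_sqrt (Cnorm2 mu)) by apply Cnorm2_ge0. unfold Cmod in hmu; rewrite hmu; ring. }
    set (c := Cmul mu (RtoC (/ s))).
    replace (Fscale c (Fadd (Cconst Kaa) (Fscale (Copp Cone) (Kker omega a))))
      with (gg omega a (Cmul c Kaa) (Copp c)).
    2: { apply functional_extensionality; intro n. unfold gg, Fadd, Fscale, Cconst. destruct n; ring. }
    assert (hc2 : Cnorm2 c = / s * / s) by (unfold c; rewrite Cnorm2_mul, Cnorm2_RtoC, hmu2; ring).
    assert (hnorm : H2_norm2 omega (gg omega a (Cmul c Kaa) (Copp c)) 1).
    { replace 1 with (Cnorm2 (Copp c) * Sv + (Cnorm2 (Cadd (Cmul c Kaa) (Copp c)) - Cnorm2 (Copp c))).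
      apply norm_g; auto.
      replace (Cadd (Cmul c Kaa) (Copp c)) with (Cmul c (RtoC (Sv - 1)))
        by (rewrite hKaa; destruct c; unfold RtoC, Cmul, Cadd, Copp; simpl; f_equal; ring).
      replace (Copp c) with (Cmul (RtoC (-1)) c)
        by (destruct c; unfold RtoC, Cmul, Copp; simpl; f_equal; ring).
      rewrite !Cnorm2_mul, !Cnorm2_RtoC, hc2.
      replace (-1 * -1 * (/ s * / s) * Sv + (/ s * / s * ((Sv - 1) * (Sv - 1)) - -1 * -1 * (/ s * / s)))
        with (/ s * / s * (s * s)) by (rewrite hss; ring).
      field; lra. }
    split; [exists 1; exact hnorm|]. split; [exact hnorm|].
    intros m hm.
    assert (hI := inner_g omega a (Cmul c Kaa) (Copp c) Sv m h0 hp hm hs).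
    replace Czero with (Cmul (Cmul (Cpow a m) (Cconj (Copp c))) (Cadd (Cscale Sv (Copp c)) (Cmul c Kaa))).
    exact hI.
    rewrite hKaa, Cscale_mul. ring.
Qed.
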